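(* Under the setting below, for any $1\le j_1\le j_2\le H-1$, any trajectory $\tau_{j_1-1}$, any policy $\pi$, any $f\in\mathcal{F}$ and any $x\in\mathbb{R}^{|\mathcal{U}_{j_1}|}$, $$\sum_{\tau_{j_1:j_2}}\big\|M_{o_{j_2},a_{j_2},j_2;f}\cdots M_{o_{j_1},a_{j_1},j_1;f}\,x\big\|_1\,\pi(\tau_{j_1:j_2}\mid\tau_{j_1-1})\le\frac{|\mathcal{U}_A|}{\alpha}\|x\|_1,$$ where the sum is over $\tau_{j_1:j_2}=(o_{j_1},a_{j_1},\dots,o_{j_2},a_{j_2})$ and $\pi(\tau_{j_1:j_2}\mid\tau_{j_1-1})=\prod_{j=j_1}^{j_2}\pi_j(a_j\mid\tau_{j_1-1},o_{j_1},a_{j_1},\dots,o_j)$.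
   Context: Process: finite $\mathcal{O},\mathcal{A}$, horizon $H$; histories $\tau_h=(o_1,a_1,\dots,o_h,a_h)$; policies pick $a_h\sim\pi_h(\cdot\mid\tau_{h-1},o_h)$. For a model $f$: a test starting at step $h$ is $t=(o_h,\dots,o_{h+W-1},a_h,\dots,a_{h+W-2})$; $\mathbb{P}_f(t\mid\tau_{h-1})$ is the probability of observing $o_{h:h+W-1}$ when executing $a_{h:h+W-2}$ after $\tau_{h-1}$ ($0$ if unreachable). A set $\mathcal{U}_h$ of tests starting at $h$ is a core test set if for every test $t$ starting at $h$ there is a history-independent $m_{t,h;f}$ with $\mathbb{P}_f(t\mid\tau_{h-1})=\langle m_{t,h;f},q_{\tau_{h-1};f}\rangle$, $q_{\tau_{h-1};f}=[\mathbb{P}_f(u\mid\tau_{h-1})]_{u\in\mathcal{U}_h}$; $q_{0;f}=[\mathbb{P}_f(u)]_{u\in\mathcal{U}_1}$; $M_{o,a,h;f}$ has rows $m_{(o,a,u),h;f}^\top$, $u\in\mathcal{U}_{h+1}$. $\mathcal{U}_{A,h}$: action sequences in $\mathcal{U}_h$; $|\mathcal{U}_A|=\max_h|\mathcal{U}_{A,h}|$. $d_{\mathrm{PSR},h;f}$ is the rank of the matrix with entries $\mathbb{P}_f(t\mid\tau_h)$. Core matrix $K_{h;f}$ ($h\ge1$): columns $q_{\tau_h^1;f},\dots,q_{\tau_h^{d_{\mathrm{PSR},h;f}};f}$ for histories whose predictive states span all $q_{\tau_h;f}$, chosen to minimize $\|K_{h;f}^\dagger\|_{1\to1}$; $K_{0;f}=q_{0;f}$.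 Standing assumptions: $\mathcal{F}$ is a model class each of whose members is a valid PSR with core test sets $\{\mathcal{U}_h\}_{h\in[H]}$ and $\|K_{h;f}^\dagger\|_{1\to1}\le1/\alpha$ for $h\in\{0,\dots,H-1\}$; every $o\in\mathcal{O}$ belongs to $\mathcal{U}_H$. Convention: for every $f\in\mathcal{F}$ the vectors $m_{(o,a,u),h;f}$ are chosen in the column space of $K_{h-1;f}$ (such a choice exists and leaves the trajectory distributions unchanged). *)

(* Defs.v *)
From mathcomp Require Import all_boot all_order all_algebra.
From mathcomp Require Import reals.
Set Implicit Arguments. Unset Strict Implicit. Unset Printing Implicit Defensive.
Import Order.TTheory GRing.Theory Num.Theory.
Local Open Scope ring_scope.

Section PSR.
Variables (R : realType) (O A : finType).

Definition hist := seq (O * A).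
(* a test (o_h,...,o_{h+W-1}, a_h,...,a_{h+W-2}) is encoded as the pairs
   ((o_h,a_h),...,(o_{h+W-2},a_{h+W-2})) together with the last observation *)
Definition test := (seq (O * A) * O)%type.

(* A model f is given by its observation kernels: T tau o is the probability
   that the next observation is o after history tau. *)
Definition kernel := hist -> O -> R.

Definition valid_model (H : nat) (T : kernel) : Prop :=
  forall tau : hist, (size tau < H)%N ->
    (forall o, 0 <= T tau o) /\ \sum_(o : O) T tau o = 1.

(* probability of observing the observations of s when executing its actions,
   after history tau *)
Fixpoint seq_prob (T : kernel) (tau : hist) (s : hist) : R :=
  match s with
  | [::] => 1
  | p :: s' => T tau p.1 * seq_prob T (rcons tau p) s'
  end.

Definition reachable (T : kernel) (tau : hist) : bool := 0 < seq_prob T [::] tau.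

Definition Pt (T : kernel) (tau : hist) (t : test) : R :=
  if reachable T tau then seq_prob T tau t.1 * T (tau ++ t.1) t.2 else 0.

Definition starts_at (H h : nat) (t : test) : bool :=
  (1 <= h)%N && (h + size t.1 <= H)%N.

Variables (T : kernel) (U : nat -> seq test).

(* predictive state q_{tau;f} in R^{|U_h|}, for tau of length h-1 *)
Definition qvec (h : nat) (tau : hist) : 'cV[R]_(size (U h)) :=
  \col_i Pt T tau (tnth (in_tuple (U h)) i).

Definition Qmat (h : nat) : 'M[R]_(size (U h), #|{: (h.-1).-tuple (O * A)}|) :=
  \matrix_(i, j) qvec h (tval (@enum_val _ (mem {: (h.-1).-tuple (O * A)}) j)) i 0.

Definition K0mat (h : nat) : 'M[R]_(size (U h), 1) := \matrix_(i, j) qvec h [::] i 0.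

Definition Kmat (h d : nat) (hs : 'I_d -> (h.-1).-tuple (O * A)) : 'M[R]_(size (U h), d) :=
  \matrix_(i, j) qvec h (hs j) i 0.

Definition is_core_choice (h d : nat) (hs : 'I_d -> (h.-1).-tuple (O * A)) : bool :=
  (d == \rank (Qmat h)) && ((Qmat h)^T <= (Kmat hs)^T)%MS.

(* Moore-Penrose pseudo-inverse of a full-column-rank matrix *)
Definition pinv (m n : nat) (K : 'M[R]_(m, n)) : 'M[R]_(n, m) :=
  invmx (K^T *m K) *m K^T.

Definition norm11 (m n : nat) (M : 'M[R]_(m, n)) : R :=
  \big[Num.max/0]_(j < n) \sum_(i < m) `|M i j|.

Definition norm1 (n : nat) (v : 'cV[R]_n) : R := \sum_(i < n) `|v i 0|.

Definition pinv_bound (alpha : R) (h : nat) : Prop :=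
  ((h <= 1)%N -> norm11 (pinv (K0mat h)) <= alpha^-1) /\
  ((1 < h)%N -> exists (d : nat) (hs : 'I_d -> (h.-1).-tuple (O * A)),
    [/\ is_core_choice hs,
        (forall hs' : 'I_d -> (h.-1).-tuple (O * A),
           is_core_choice hs' -> norm11 (pinv (Kmat hs)) <= norm11 (pinv (Kmat hs')))
      & norm11 (pinv (Kmat hs)) <= alpha^-1]).

Definition in_colK (h : nat) (v : 'rV[R]_(size (U h))) : Prop :=
  ((h <= 1)%N -> (v <= (K0mat h)^T)%MS) /\
  ((1 < h)%N -> forall (d : nat) (hs : 'I_d -> (h.-1).-tuple (O * A)),
         is_core_choice hs -> (v <= (Kmat hs)^T)%MS).

Variable m : forall h : nat, test -> 'rV[R]_(size (U h)).

Definition Mmat (h : nat) (o : O) (a : A) : 'M[R]_(size (U h.+1), size (U h)) :=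
  \matrix_(i, j) m h ((o, a) :: (tnth (in_tuple (U h.+1)) i).1,
                      (tnth (in_tuple (U h.+1)) i).2) 0 j.

(* for r = rev (tau_{h:h+L-1}): M_{o_{h+L-1},a_{h+L-1},h+L-1} ... M_{o_h,a_h,h} *)
Fixpoint Mprod (h : nat) (r : seq (O * A)) : 'M[R]_(size (U (size r + h)), size (U h)) :=
  match r return 'M[R]_(size (U (size r + h)), size (U h)) with
  | [::] => 1%:M
  | p :: r' => Mmat (size r' + h) p.1 p.2 *m Mprod h r'
  end.

End PSR.

(* policies: pi tau o a = pi_h(a | tau_{h-1}, o_h) *)
Definition policy (R : realType) (O A : finType) := hist O A -> O -> A -> R.

Definition valid_policy (R : realType) (O A : finType) (H : nat) (pi : policy R O A) : Prop :=
  forall tau : hist O A, (size tau < H)%N -> forall o : O,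
    (forall a, 0 <= pi tau o a) /\ \sum_(a : A) pi tau o a = 1.

Fixpoint pol_prob (R : realType) (O A : finType) (pi : policy R O A)
    (tau : hist O A) (s : hist O A) : R :=
  match s with
  | [::] => 1
  | p :: s' => pi tau p.1 p.2 * pol_prob pi (rcons tau p) s'
  end.

Definition UA_size (O A : finType) (H : nat) (U : nat -> seq (test O A)) : nat :=
  \max_(h < H) size (undup (map (fun u : test O A => map snd u.1) (U h.+1))).

(* Main.v *)
Require Import Defs.
From mathcomp Require Import all_boot all_order all_algebra.
From mathcomp Require Import reals.
From mathcomp Require Import zify ring.
Import Order.TTheory GRing.Theory Num.Theory.
Local Open Scope ring_scope.
Set Implicit Arguments. Unset Strict Implicit. Unset Printing Implicit Defensive.

Lemma seq_prob_cat (R : realType) (O A : finType) (T : kernel R O A) s1 s2 tau :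
  seq_prob T tau (s1 ++ s2) = seq_prob T tau s1 * seq_prob T (tau ++ s1) s2.
Proof.
elim: s1 tau => [|p s1 IH] tau /=; first by rewrite cats0 mul1r.
by rewrite IH cat_rcons mulrA.
Qed.

Lemma seq_prob_rcons (R : realType) (O A : finType) (T : kernel R O A) s p tau :
  seq_prob T tau (rcons s p) = seq_prob T tau s * T (tau ++ s) p.1.
Proof. by rewrite -cats1 seq_prob_cat /= mulr1. Qed.

Lemma seq_prob_ge0 (R : realType) (O A : finType) (H : nat) (T : kernel R O A) :
  valid_model H T -> forall s tau, (size tau + size s <= H)%N -> 0 <= seq_prob T tau s.
Proof.
move=> vT; elim=> [|p s IH] tau /= hs; first exact: ler01.
apply: mulr_ge0; first by case: (vT tau _) => //; rewrite -addn1; apply: leq_trans hs; rewrite leq_add2l.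
by apply: IH; rewrite size_rcons addSnnS.
Qed.

Lemma Pt_ge0 (R : realType) (O A : finType) (H : nat) (T : kernel R O A) tau t :
  valid_model H T -> (size tau + size t.1 < H)%N -> 0 <= Pt T tau t.
Proof.
move=> vT hs; rewrite /Pt; case: ifP => // _.
apply: mulr_ge0; first by apply: seq_prob_ge0 vT _ _ (ltnW hs).
by case: (vT (tau ++ t.1)) => //; rewrite size_cat.
Qed.

Lemma Pt_cons (R : realType) (O A : finType) (T : kernel R O A) tau o a l o' :
  0 <= T tau o -> Pt T tau ((o, a) :: l, o') = T tau o * Pt T (rcons tau (o, a)) (l, o').
Proof.
move=> hT; rewrite /Pt /reachable /= seq_prob_rcons /=.
case: ifP => hr.
  case: ifP => hr2; first by rewrite cat_rcons mulrA.
  have : T tau o = 0.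
    apply/eqP; rewrite eq_le hT andbT leNgt; apply/negP => hpos.
    by move: hr2; rewrite pmulr_rgt0 // hpos.
  by move=> ->; rewrite !mul0r.
case: ifP => hr2; last by rewrite mulr0.
exfalso; move: hr2; rewrite ltNge mulr_le0_ge0 //.
by rewrite leNgt hr.
Qed.

Lemma sum_tuple (R : realType) (X : finType) n (F : n.+1.-tuple X -> R) :
  \sum_(s : n.+1.-tuple X) F s = \sum_(x : X) \sum_(s : n.-tuple X) F (cons_tuple x s).
Proof.
rewrite pair_big /=.
rewrite (reindex (fun p : X * n.-tuple X => cons_tuple p.1 p.2)) /=; last first.
  exists (fun s : n.+1.-tuple X => (thead s, behead_tuple s)) => [[x s] _|s _] /=.
    by congr (_, _); apply: val_inj.
  by rewrite [in RHS](tuple_eta s); apply: val_inj.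
by apply: eq_bigr => -[x s].
Qed.

Lemma sum_tuple0 (R : realType) (X : finType) (F : 0.-tuple X -> R) :
  \sum_(s : 0.-tuple X) F s = F [tuple].
Proof.
rewrite (eq_bigr (fun _ => F [tuple])); last by move=> s _; rewrite (tuple0 s).
by rewrite sumr_const card_tuple expn0.
Qed.

Lemma sum_seq_prob (R : realType) (O A : finType) (H : nat) (T : kernel R O A) :
  valid_model H T -> forall (b : seq A) tau, (size tau + size b <= H)%N ->
  \sum_(obs : (size b).-tuple O) seq_prob T tau (zip obs b) = 1.
Proof.
move=> vT; elim=> [|a b IH] tau hs /=.
  by rewrite sum_tuple0.
rewrite sum_tuple /=.
rewrite -(proj2 (vT tau _)); last by apply: leq_trans hs; rewrite -addSnnS leq_addr.
apply: eq_bigr => o _.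
rewrite -mulr_sumr IH ?mulr1 //.
by rewrite size_rcons addSnnS.
Qed.

Lemma pol_prob_ge0 (R : realType) (O A : finType) (H : nat) (pi : policy R O A) :
  valid_policy H pi -> forall s tau, (size tau + size s <= H)%N -> 0 <= pol_prob pi tau s.
Proof.
move=> vp; elim=> [|p s IH] tau /= hs; first exact: ler01.
apply: mulr_ge0; first by case: (vp tau _ p.1) => //; rewrite -addn1; apply: leq_trans hs; rewrite leq_add2l.
by apply: IH; rewrite size_rcons addSnnS.
Qed.

Lemma sum_pol_seq (R : realType) (O A : finType) (H : nat) (T : kernel R O A) (pi : policy R O A) :
  valid_model H T -> valid_policy H pi -> forall n tau tau',
  (size tau + n <= H)%N -> (size tau' + n <= H)%N ->
  \sum_(s : n.-tuple (O * A)) pol_prob pi tau s * seq_prob T tau' s = 1.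
Proof.
move=> vT vp; elim=> [|n IH] tau tau' h1 h2.
  by rewrite sum_tuple0 /= mulr1.
rewrite sum_tuple /=.
have lt1 : (size tau < H)%N by apply: leq_trans h1; rewrite -addSnnS leq_addr.
have lt2 : (size tau' < H)%N by apply: leq_trans h2; rewrite -addSnnS leq_addr.
transitivity (\sum_(p : O * A) pi tau p.1 p.2 * T tau' p.1).
  apply: eq_bigr => p _.
  rewrite (eq_bigr (fun s : n.-tuple (O * A) => (pi tau p.1 p.2 * T tau' p.1) *
      (pol_prob pi (rcons tau p) s * seq_prob T (rcons tau' p) s))); last first.
    by move=> s _; rewrite /= mulrACA.
  by rewrite -mulr_sumr IH ?mulr1 // size_rcons addSnnS.
rewrite -(pair_big xpredT xpredT (fun o a => pi tau o a * T tau' o)) /=.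
rewrite -(proj2 (vT tau' lt2)); apply: eq_bigr => o _.
by rewrite -mulr_suml (proj2 (vp tau lt1 o)) mul1r.
Qed.

Lemma filt_bound (R : realType) (O A : finType) (H : nat) (T : kernel R O A)
    (r : seq (test O A)) (b : seq A) (tau : hist O A) :
  valid_model H T -> uniq r -> (size tau + size b < H)%N ->
  \sum_(u <- r | map snd u.1 == b) Pt T tau u <= 1.
Proof.
move=> vT ur hs.
pose f (u : test O A) : (size b).-tuple O * O :=
  (insubd (nseq_tuple (size b) u.2) (map fst u.1), u.2).
pose G (y : (size b).-tuple O * O) := Pt T tau (zip y.1 b, y.2).
have fE : forall u : test O A, map snd u.1 == b -> tval (f u).1 = map fst u.1.
  move=> u /eqP hb; rewrite /f /= val_insubd size_map.
  by rewrite -hb size_map eqxx.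
have GE : forall u : test O A, map snd u.1 == b -> G (f u) = Pt T tau u.
  move=> u hb; rewrite /G fE //.
  have -> : (f u).2 = u.2 by [].
  by move/eqP: hb => <-; rewrite (zip_unzip u.1); case: u.
rewrite -(eq_bigr _ (fun u => GE u)).
rewrite -big_filter -(big_map f xpredT G).
rewrite big_uniq; last first.
  rewrite map_inj_in_uniq ?filter_uniq //.
  move=> u v; rewrite !mem_filter => /andP [hu _] /andP [hv _] [e1 e2].
  have e3 : map fst u.1 = map fst v.1 by rewrite -fE // -fE // /f /= e1.
  case: u v hu hv e1 e2 e3 => [lu ou] [lv ov] /= /eqP hu /eqP hv _ -> e3.
  by rewrite -(zip_unzip lu) -(zip_unzip lv) /unzip1 /unzip2 e3 hu hv.
have G0 : forall y, 0 <= G y.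
  by move=> y; apply: Pt_ge0 vT _; rewrite /= size_zip size_tuple minnn.
apply: (@le_trans _ _ (\sum_y G y)).
  rewrite big_mkcond /=; apply: ler_sum => y _; case: ifP => // _.
rewrite -(pair_big xpredT xpredT (fun o1 o2 => G (o1, o2))) /=.
rewrite /G /Pt; case hr: (reachable T tau); last first.
  by rewrite big1 ?ler01 // => y _; rewrite big1.
have hsz : forall y : (size b).-tuple O, size (zip y b) = size b.
  by move=> y; rewrite size_zip size_tuple minnn.
rewrite (eq_bigr (fun y : (size b).-tuple O => seq_prob T tau (zip y b))).
  by rewrite /= (sum_seq_prob vT) ?lexx // ltnW.
move=> y _ /=; rewrite -mulr_sumr (proj2 (vT _ _)) ?mulr1 //.
by rewrite size_cat hsz.
Qed.

Lemma sum_pred1_uniq (R : realType) (X : eqType) (s : seq X) (x : X) (c : R) :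
  uniq s -> x \in s -> \sum_(b <- s | b == x) c = c.
Proof.
move=> us xs; rewrite big_const_seq.
have -> : count (fun b => b == x) s = 1%N by rewrite (count_uniq_mem x us) xs.
by rewrite /= addr0.
Qed.

Definition acts (O A : finType) (u : test O A) : seq A := map snd u.1.

Lemma q_bound (R : realType) (O A : finType) (H : nat) (T : kernel R O A)
    (U : nat -> seq (test O A)) h (tau : hist O A) :
  valid_model H T -> (1 <= h)%N -> uniq (U h) -> all (starts_at H h) (U h) ->
  size tau = h.-1 ->
  norm1 (qvec T U h tau) <= (size (undup (map (@acts O A) (U h))))%:R.
Proof.
move=> vT h1 uU sU stau.
have hPt : forall u, u \in U h -> (size tau + size u.1 < H)%N.
  move=> u /(allP sU) /andP [_ hu]; apply: leq_trans hu.
  by rewrite stau -addSn prednK.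
rewrite /norm1 (eq_bigr (fun i => Pt T tau (tnth (in_tuple (U h)) i))); last first.
  move=> i _; rewrite mxE ger0_norm //; apply: Pt_ge0 vT _; apply: hPt; exact: mem_tnth.
rewrite -(big_tnth _ _ _ xpredT (Pt T tau)).
set B := undup _.
have uB : uniq B by apply: undup_uniq.
rewrite big_seq (eq_bigr (fun u => \sum_(b <- B | b == acts u) Pt T tau u)); last first.
  by move=> u hu; rewrite sum_pred1_uniq // mem_undup map_f.
rewrite -big_seq.
rewrite (eq_bigr (fun u => \sum_(b <- B) if b == acts u then Pt T tau u else 0)); last first.
  by move=> u _; rewrite big_mkcond.
rewrite exchange_big /=.
have -> : (size B)%:R = \sum_(b <- B) (1 : R).
  by elim: (B) => [|x s IH]; rewrite ?big_nil ?big_cons // -IH /= mulrS.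
rewrite big_seq [X in _ <= X]big_seq; apply: ler_sum => b hb.
rewrite -big_mkcond /=.
rewrite (eq_bigl (fun u => map snd u.1 == b)); last by move=> u; rewrite eq_sym.
apply: filt_bound vT uU _.
move: hb; rewrite mem_undup => /mapP [u hu ->].
by rewrite size_map; apply: hPt.
Qed.

Lemma Mmat_q (R : realType) (O A : finType) (H : nat) (T : kernel R O A)
    (U : nat -> seq (test O A)) (m : forall h : nat, test O A -> 'rV[R]_(size (U h))) :
  valid_model H T ->
  (forall h, (1 <= h <= H)%N -> uniq (U h) /\ all (starts_at H h) (U h)) ->
  (forall h, (1 <= h <= H)%N -> forall t : test O A, starts_at H h t ->
     (forall tau : (h.-1).-tuple (O * A),
        Pt T tau t = (m h t *m qvec T U h tau) 0 0)) ->
  forall h (tau : hist O A) o a, (1 <= h)%N -> (h < H)%N -> size tau = h.-1 ->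
  Mmat m h o a *m qvec T U h tau = T tau o *: qvec T U h.+1 (rcons tau (o, a)).
Proof.
move=> vT hU hm h tau o a h1 hH stau.
apply/matrixP => i j; rewrite ord1 !mxE.
set u := tnth (in_tuple (U h.+1)) i.
have su : starts_at H h.+1 u.
  by have [_ /allP] := hU h.+1 hH; apply; apply: mem_tnth.
have st : starts_at H h ((o, a) :: u.1, u.2).
  by move: su; rewrite /starts_at h1 /= addnS.
have hb : (0 < h <= H)%N by rewrite h1 ltnW.
have := hm h hb _ st (Tuple (introT eqP stau)); rewrite /= => e.
rewrite -Pt_cons; last first.
  by case: (vT tau _) => //; rewrite stau; apply: leq_ltn_trans hH; apply: leq_pred.
rewrite e mxE; apply: eq_bigr => k _; rewrite !mxE //.
Qed.

Lemma Mprod_q (R : realType) (O A : finType) (H : nat) (T : kernel R O A)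
    (U : nat -> seq (test O A)) (m : forall h : nat, test O A -> 'rV[R]_(size (U h))) :
  valid_model H T ->
  (forall h, (1 <= h <= H)%N -> uniq (U h) /\ all (starts_at H h) (U h)) ->
  (forall h, (1 <= h <= H)%N -> forall t : test O A, starts_at H h t ->
     (forall tau : (h.-1).-tuple (O * A),
        Pt T tau t = (m h t *m qvec T U h tau) 0 0)) ->
  forall h (tau : hist O A), (1 <= h)%N -> size tau = h.-1 ->
  forall r, (size r + h <= H)%N ->
  Mprod m h r *m qvec T U h tau = seq_prob T tau (rev r) *: qvec T U (size r + h) (tau ++ rev r).
Proof.
move=> vT hU hm h tau h1 stau; elim=> [|p r IH] hs.
  by rewrite /= mul1mx scale1r cats0.
rewrite /= -mulmxA IH; last by apply: ltnW.
rewrite -scalemxAr.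
have h1' : (1 <= size r + h)%N by apply: leq_trans h1 (leq_addl _ _).
rewrite (Mmat_q vT hU hm (tau:=tau ++ rev r) p.1 p.2 h1' hs); last first.
  by rewrite size_cat size_rev stau addnC -subn1 -subn1 addnBA.
rewrite scalerA rev_cons seq_prob_rcons -rcons_cat -surjective_pairing.
by [].
Qed.

Lemma Mprod_P (R : realType) (O A : finType)
    (U : nat -> seq (test O A)) (m : forall h : nat, test O A -> 'rV[R]_(size (U h)))
    h (P : 'M[R]_(size (U h))) :
  (forall o a, Mmat m h o a *m P = Mmat m h o a) ->
  forall r, r != [::] -> Mprod m h r *m P = Mprod m h r.
Proof.
move=> hP; elim=> [|p r IH] // _.
rewrite /= -mulmxA; case: r IH => [|q r] IH.
  by rewrite /= mul1mx mulmx1 hP.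
by rewrite IH.
Qed.

Lemma gram_unit (R : realType) n d (K : 'M[R]_(n, d)) :
  row_free K^T -> K^T *m K \in unitmx.
Proof.
move=> rf; rewrite -row_free_unit -kermx_eq0.
set W := kermx _.
have hW : W *m (K^T *m K) = 0 := mulmx_ker _.
suff : W *m K^T = 0 by move/eqP; rewrite mulmx_free_eq0.
apply/row_matrixP => i; rewrite row_mul row0.
set w := row i W; set z := w *m K^T.
have zK : z *m K = 0 by rewrite /z -mulmxA /w -row_mul hW row0.
have zz : z *m z^T = 0 by rewrite {2}/z trmx_mul trmxK mulmxA zK mul0mx.
have hs : \sum_j z 0 j ^+ 2 = 0.
  transitivity ((z *m z^T) 0 0); last by rewrite zz mxE.
  rewrite [RHS]mxE; apply: eq_bigr => j _; rewrite [z^T j 0]mxE expr2 //.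
apply/rowP => j.
have := psumr_eq0P (fun j _ => sqr_ge0 (z 0 j)) hs isT.
move=> /(_ j) /eqP; rewrite sqrf_eq0 => /eqP ->; rewrite mxE //.
Qed.

Lemma proj_id (R : realType) n d (K : 'M[R]_(n, d)) (v : 'rV[R]_n) :
  (v <= K^T)%MS -> (K^T *m K \in unitmx \/ v = 0) -> v *m (K *m pinv K) = v.
Proof.
move=> /submxP [w ->] [hu|->]; last by rewrite mul0mx.
by rewrite /pinv !mulmxA -(mulmxA w) mulmxK.
Qed.

Lemma bigmax_ge (R : realType) (I : eqType) (r : seq I) (F : I -> R) j0 :
  j0 \in r -> F j0 <= \big[Num.max/0]_(j <- r) F j.
Proof.
elim: r => [|x r IH] //; rewrite inE big_cons => /orP [/eqP ->|h].
  by rewrite le_max lexx.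
by rewrite le_max IH ?orbT.
Qed.

Lemma norm1_ge0 (R : realType) n (v : 'cV[R]_n) : 0 <= norm1 v.
Proof. by apply: sumr_ge0 => i _; apply: normr_ge0. Qed.

Lemma norm1_mul (R : realType) n k (M : 'M[R]_(n, k)) (x : 'cV[R]_k) :
  norm1 (M *m x) <= norm11 M * norm1 x.
Proof.
rewrite /norm1 mulr_sumr.
apply: (@le_trans _ _ (\sum_i \sum_j `|M i j| * `|x j 0|)).
  apply: ler_sum => i _; rewrite mxE.
  apply: le_trans (ler_norm_sum _ _ _) _.
  by apply: ler_sum => j _; rewrite normrM.
rewrite exchange_big /=; apply: ler_sum => j _.
rewrite -mulr_suml ler_wpM2r //.
by apply: (@bigmax_ge R _ (index_enum 'I_k) (fun j => \sum_i `|M i j|)); rewrite mem_index_enum.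
Qed.

Lemma norm1_scale (R : realType) n (c : R) (v : 'cV[R]_n) :
  norm1 (c *: v) = `|c| * norm1 v.
Proof. by rewrite /norm1 mulr_sumr; apply: eq_bigr => i _; rewrite mxE normrM. Qed.

Lemma norm1_sum (R : realType) n (I : finType) (v : I -> 'cV[R]_n) :
  norm1 (\sum_l v l) <= \sum_l norm1 (v l).
Proof.
rewrite /norm1 exchange_big /=; apply: ler_sum => i _.
by rewrite summxE; apply: ler_norm_sum.
Qed.

Theorem lemma10 (R : realType) (O A : finType) (H : nat)
    (T : kernel R O A) (U : nat -> seq (test O A))
    (m : forall h : nat, test O A -> 'rV[R]_(size (U h)))
    (alpha : R) (pi : policy R O A) :
  0 < alpha ->
  valid_model H T ->
  (forall h, (1 <= h <= H)%N -> uniq (U h) /\ all (starts_at H h) (U h)) ->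
  (forall h, (1 <= h <= H)%N -> forall t : test O A, starts_at H h t ->
     (forall tau : (h.-1).-tuple (O * A),
        Pt T tau t = (m h t *m qvec T U h tau) 0 0)
     /\ in_colK T (m h t)) ->
  (forall h, (1 <= h <= H)%N -> pinv_bound T U alpha h) ->
  (forall o : O, ([::], o) \in U H) ->
  valid_policy H pi ->
  forall (j1 j2 : nat), (1 <= j1)%N -> (j1 <= j2)%N -> (j2 <= H.-1)%N ->
  forall (tau : hist O A), size tau = j1.-1 ->
  forall x : 'cV[R]_(size (U j1)),
    \sum_(s : (j2 - j1).+1.-tuple (O * A))
       norm1 (Mprod m j1 (rev s) *m x) * pol_prob pi tau s
    <= ((UA_size H U)%:R / alpha) * norm1 x.
Proof.
move=> halpha vT hU hm hpinv hUH vp j1 j2 hj1 hj12 hj2 tau stau x.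
have hj2H : (j2 < H)%N by move: hj2 hj1 hj12; clear; lia.
have hj1H : (1 <= j1 <= H)%N by rewrite hj1; move: hj2H hj12; clear; lia.
have hm1 := fun h hh t st => proj1 (hm h hh t st).
have hPgen : forall d (hs : 'I_d -> (j1.-1).-tuple (O * A)),
   (forall t, starts_at H j1 t -> (m j1 t <= (Kmat T U hs)^T)%MS /\
        ((Kmat T U hs)^T *m Kmat T U hs \in unitmx \/ m j1 t = 0)) ->
   forall o a, Mmat m j1 o a *m (Kmat T U hs *m pinv (Kmat T U hs)) = Mmat m j1 o a.
  move=> d hs ht o a; apply/row_matrixP => i; rewrite row_mul.
  set u := tnth (in_tuple (U j1.+1)) i.
  have su : starts_at H j1.+1 u.
    have hh : (0 < j1.+1 <= H)%N by move: hj2H hj12; clear; lia.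
    have [_ /allP] := hU j1.+1 hh; apply.
    apply: mem_tnth.
  have st : starts_at H j1 ((o, a) :: u.1, u.2).
    by move: su; rewrite /starts_at hj1 /= addnS.
  have -> : row i (Mmat m j1 o a) = m j1 ((o, a) :: u.1, u.2).
    by apply/rowP => k; rewrite !mxE.
  by have [h1 h2] := ht _ st; apply: proj_id h1 h2.
have key : exists d (hs : 'I_d -> (j1.-1).-tuple (O * A)),
    (norm11 (pinv (Kmat T U hs)) <= alpha^-1) /\
    (forall o a, Mmat m j1 o a *m (Kmat T U hs *m pinv (Kmat T U hs)) = Mmat m j1 o a).
  case: (ltnP 1 j1) => hj.
    have [_ /(_ hj) [d [hs [hcore _ hbd]]]] := hpinv j1 hj1H.
    exists d, hs; split => //; apply: hPgen => t st.
    have [_ [_ /(_ hj d hs hcore) hsub]] := hm j1 hj1H t st.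
    split => //; left; apply: gram_unit.
    rewrite /row_free; move: hcore => /andP [/eqP hd hQ].
    apply/eqP/anti_leq; rewrite rank_leq_row /=.
    rewrite [X in (X <= _)%N]hd -(mxrank_tr (Qmat T U j1)).
    exact: mxrankS.
  have e1 : j1 = 1%N by move: hj hj1; clear; lia.
  subst j1.
  pose hs := fun _ : 'I_1 => ([tuple] : (1.-1).-tuple (O * A)).
  have eK : Kmat T U (h:=1) hs = K0mat T U 1.
    by apply/matrixP => i j; rewrite !mxE.
  exists 1%N, hs; rewrite eK; split.
    by have [/(_ (leqnn 1))] := hpinv 1%N hj1H.
  apply: hPgen => t st; rewrite eK.
  have [_ [/(_ (leqnn 1)) hsub _]] := hm 1%N hj1H t st.
  split => //.
  have : (\rank (K0mat T U 1)^T <= 1)%N by apply: rank_leq_row.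
  rewrite leq_eqVlt ltnS leqn0 => /orP [hr|].
    by left; apply: gram_unit.
  rewrite mxrank_eq0 => /eqP h0; right; apply/eqP.
  by move: hsub; rewrite h0 => /submx0null ->.
have [d [hs [hbd hP]]] := key.
set K := Kmat T U hs.
set y := pinv K *m x.
set N := UA_size H U.
set k := (j2 - j1)%N.
have hsz : (j1.-1 + k.+1 = j2)%N by rewrite /k; move: hj1 hj12; clear; lia.
have hN : forall h (tau' : hist O A), h = j2.+1 -> size tau' = j2 ->
    norm1 (qvec T U h tau') <= N%:R.
  move=> h tau' -> st'.
  have hhH : (0 < j2.+1 <= H)%N by [].
  have [uU sU] := hU _ hhH.
  apply: le_trans (q_bound vT _ uU sU _) _ => //.
  rewrite ler_nat /N /UA_size.
  exact: (@leq_bigmax _ (fun i : 'I_H => size (undup (map (fun u : test O A => map snd u.1) (U i.+1)))) (Ordinal hj2H)).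
have hsb : forall s : k.+1.-tuple (O * A),
    norm1 (Mprod m j1 (rev s) *m x) <= \sum_l `|y l 0| * seq_prob T (hs l) s * N%:R.
  move=> s.
  have ne : rev s != [::] by rewrite -size_eq0 size_rev size_tuple.
  have -> : Mprod m j1 (rev s) *m x = Mprod m j1 (rev s) *m (K *m y).
    by rewrite /y [K *m _]mulmxA mulmxA (Mprod_P hP ne).
  have eKy : K *m y = \sum_l y l 0 *: qvec T U j1 (hs l).
    apply/matrixP => i j; rewrite ord1 !mxE summxE; apply: eq_bigr => l _.
    by rewrite !mxE mulrC.
  have hh : (size (rev s) + j1 = j2.+1)%N.
    by rewrite size_rev size_tuple; move: hsz hj1; clear; lia.
  have hrs : (size (rev s) + j1 <= H)%N.
    by rewrite size_rev size_tuple; move: hsz hj1 hj2H; clear; lia.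
  rewrite eKy mulmx_sumr.
  rewrite (eq_bigr (fun l => (y l 0 * seq_prob T (hs l) s) *:
      qvec T U (size (rev s) + j1) (hs l ++ s))); last first.
    move=> l _; rewrite -scalemxAr (Mprod_q vT hU hm1 hj1 (size_tuple (hs l)) hrs).
    by rewrite revK scalerA.
  apply: le_trans (norm1_sum _) _; apply: ler_sum => l _.
  have sp0 : 0 <= seq_prob T (hs l) s.
    by apply: (seq_prob_ge0 vT); rewrite !size_tuple; move: hsz hj1 hj2H; clear; lia.
  rewrite norm1_scale normrM (ger0_norm sp0).
  rewrite ler_wpM2l ?mulr_ge0 ?normr_ge0 // (hN _ _ hh) //.
  by rewrite size_cat !size_tuple.
have pol0 : forall s : k.+1.-tuple (O * A), 0 <= pol_prob pi tau s.
  by move=> s; apply: (pol_prob_ge0 vp); rewrite size_tuple stau; move: hsz hj1 hj2H; clear; lia.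
apply: (@le_trans _ _ (\sum_(s : k.+1.-tuple (O * A))
    (\sum_l `|y l 0| * seq_prob T (hs l) s * N%:R) * pol_prob pi tau s)).
  apply: ler_sum => s _; apply: ler_wpM2r; [exact: pol0 | exact: hsb].
rewrite (eq_bigr (fun s : k.+1.-tuple (O * A) => \sum_l (`|y l 0| * N%:R) * (pol_prob pi tau s * seq_prob T (hs l) s))); last first.
  by move=> s _; rewrite mulr_suml; apply: eq_bigr => l _; ring.
rewrite exchange_big /=.
rewrite (eq_bigr (fun l => `|y l 0| * N%:R)); last first.
  move=> l _; rewrite -mulr_sumr (sum_pol_seq vT vp) ?mulr1 //.
    by rewrite stau; move: hsz hj1 hj2H; clear; lia.
  by rewrite size_tuple; move: hsz hj1 hj2H; clear; lia.
rewrite -mulr_suml.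
have ny : \sum_l `|y l 0| = norm1 y by [].
rewrite ny mulrC -mulrA ler_wpM2l ?ler0n //.
apply: le_trans (norm1_mul _ _) _.
by rewrite ler_wpM2r ?norm1_ge0.
Qed.
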